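(* Let $F_1$ be the disjoint union of $S_0$ and $S_{2,1^2}$. Then $\mathrm{HDE}(F_1;S_{2,1^0})=2$; consequently, for every graph $G$, $\hom(S_0;G)\cdot\hom(S_{2,1^2};G)\ge\hom(S_{2,1^0};G)^2$.
   Context: All graphs are finite; $\hom(H;G)$ is the number of graph homomorphisms from $H$ to $G$ (so $\hom$ of a disjoint union is the product of the $\hom$'s of the components). $S_0$ is a single vertex; for $k\ge0$, $S_{2,1^k}$ is the tree with vertex set $\{1,\ldots,k+3\}$ and edge set $\{\{1,j\}:2\le j\le k+2\}\cup\{\{k+2,k+3\}\}$. The homomorphism domination exponent $\mathrm{HDE}(F_1;F_2)$ of graphs $F_1,F_2$ is the maximum real $c$ such that $\hom(F_1;G)\ge\hom(F_2;G)^c$ for every graph $G$. *)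

(* Defs.v *)
From HB Require Import structures.
From mathcomp Require Import all_boot all_order all_algebra.
From mathcomp Require Import reals exp.
Set Implicit Arguments. Unset Strict Implicit. Unset Printing Implicit Defensive.
Import Order.TTheory GRing.Theory Num.Theory.
Local Open Scope ring_scope.

Record graph := Graph {
  vtx : finType;
  adj : rel vtx;
  adj_sym : symmetric adj;
  adj_irr : irreflexive adj }.

Definition hom (H G : graph) : nat :=
  #|[set f : {ffun vtx H -> vtx G} |
      [forall x, forall y, adj x y ==> adj (f x) (f y)]]|.

Definition dunion_adj (G H : graph) : rel (vtx G + vtx H)%type :=
  fun x y => match x, y with
             | inl a, inl b => adj a b
             | inr a, inr b => adj a b
             | _, _ => false end.

Lemma dunion_sym (G H : graph) : symmetric (@dunion_adj G H).
Proof. by case=> a [] b //=; apply: adj_sym. Qed.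

Lemma dunion_irr (G H : graph) : irreflexive (@dunion_adj G H).
Proof. by case=> a /=; apply: adj_irr. Qed.

Definition dunion (G H : graph) : graph :=
  Graph (@dunion_sym G H) (@dunion_irr G H).

Definition S0_adj : rel 'I_1 := fun _ _ => false.
Lemma S0_sym : symmetric S0_adj. Proof. by []. Qed.
Lemma S0_irr : irreflexive S0_adj. Proof. by []. Qed.
Definition S0 : graph := Graph S0_sym S0_irr.

(* S_{2,1^k}: vertices {1,...,k+3} encoded as 'I_(k+3) via i <-> i+1;
   edges {1,j} for 2 <= j <= k+2, and {k+2,k+3}. *)
Definition S21_edge (k : nat) (a b : nat) : bool :=
  (((a == 0) && (1 <= b <= k.+1)) || ((a == k.+1) && (b == k.+2)))%N.
Definition S21_adj (k : nat) : rel 'I_(k.+3) :=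
  fun x y => S21_edge k x y || S21_edge k y x.
Lemma S21_sym k : symmetric (@S21_adj k).
Proof. by move=> x y; rewrite /S21_adj orbC. Qed.
Lemma S21_irr k : irreflexive (@S21_adj k).
Proof.
move=> x; rewrite /S21_adj /S21_edge orbb.
case: x => [[|x] _] //=; rewrite !eqSS.
by case: (x =P k) => // ->; rewrite /= (ltn_eqF (ltnSn k)).
Qed.
Definition S21 (k : nat) : graph := Graph (@S21_sym k) (@S21_irr k).

Definition dominates (R : realType) (F1 F2 : graph) (c : R) : Prop :=
  forall G : graph, powR (hom F2 G)%:R c <= (hom F1 G)%:R.

Definition isHDE (R : realType) (F1 F2 : graph) (c : R) : Prop :=
  dominates F1 F2 c /\ (forall c' : R, dominates F1 F2 c' -> c' <= c).

(* Main.v *)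
Require Import Defs.
From HB Require Import structures.
From mathcomp Require Import all_boot all_order ssralg ssrnum.
From mathcomp Require Import reals exp.
From mathcomp Require Import ring.
Import Order.TTheory GRing.Theory Num.Theory.
Set Implicit Arguments. Unset Strict Implicit. Unset Printing Implicit Defensive.

Lemma CS (I : finType) (a x : I -> nat) :
  (\sum_i a i * x i) ^ 2 <= (\sum_i a i) * (\sum_i a i * x i ^ 2).
Proof.
have E1 : 2 * (\sum_i a i * x i) ^ 2 =
   \sum_i \sum_j a i * a j * (2 * (x i * x j)).
  rewrite expnS expn1 big_distrl big_distrr /=; apply: eq_bigr => i _.
  rewrite big_distrr big_distrr /=; apply: eq_bigr => j _; ring.
have E2 : 2 * ((\sum_i a i) * (\sum_i a i * x i ^ 2)) =
   \sum_i \sum_j a i * a j * (x i ^ 2 + x j ^ 2).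
  have E3 : (\sum_i a i) * (\sum_i a i * x i ^ 2) = \sum_i \sum_j a i * a j * x j ^ 2.
    rewrite big_distrl /=; apply: eq_bigr => i _; rewrite big_distrr /=.
    by apply: eq_bigr => j _; rewrite mulnA.
  rewrite mul2n -addnn E3 [X in X + _]exchange_big -big_split /=.
  apply: eq_bigr => i _; rewrite -big_split /=; apply: eq_bigr => j _; ring.
rewrite -(leq_pmul2l (isT : 0 < 2)) E1 E2.
apply: leq_sum => i _; apply: leq_sum => j _; apply: leq_mul => //.
exact: nat_Cauchy.
Qed.

Lemma homE H G : hom H G = \sum_(f : {ffun vtx H -> vtx G})
   [forall x, forall y, adj x y ==> adj (f x) (f y)].
Proof.
rewrite /hom -sum1_card big_mkcond /=; apply: eq_bigr => f _.
by rewrite in_set; case: ifP.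
Qed.

Lemma sum_pair (X Y : finType) (F : X * Y -> nat) :
  \sum_(p : X * Y) F p = \sum_(x : X) \sum_(y : Y) F (x, y).
Proof. by rewrite pair_big; apply: eq_bigr => -[]. Qed.

Section G.
Variable G : graph.
Local Notation T := (vtx G).
Definition dg (v : T) : nat := \sum_w adj v w.

Definition o5 (k : nat) (H : (k < 5)%N) : 'I_5 := Ordinal H.
Definition psi5 (t : T * T * T * T * T) : {ffun 'I_5 -> T} :=
  let: (a, b, c, d, e) := t in [ffun i : 'I_5 => nth a [:: a; b; c; d; e] i].
Definition phi5 (f : {ffun 'I_5 -> T}) : T * T * T * T * T :=
  (f (@o5 0 isT), f (@o5 1 isT), f (@o5 2 isT), f (@o5 3 isT), f (@o5 4 isT)).

Lemma psi5K : cancel psi5 phi5.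
Proof. by move=> [[[[a b] c] d] e]; rewrite /phi5 /= !ffunE. Qed.
Lemma phi5K : cancel phi5 psi5.
Proof.
move=> f; apply/ffunP => i; rewrite /= ffunE.
by case: i => [[|[|[|[|[|k]]]]] Hk] //=; congr (f _); apply: val_inj.
Qed.

Definition psi3 (t : T * T * T) : {ffun 'I_3 -> T} :=
  let: (a, b, c) := t in [ffun i : 'I_3 => nth a [:: a; b; c] i].
Definition phi3 (f : {ffun 'I_3 -> T}) : T * T * T :=
  (f (@Ordinal 3 0 isT), f (@Ordinal 3 1 isT), f (@Ordinal 3 2 isT)).
Lemma psi3K : cancel psi3 phi3.
Proof. by move=> [[a b] c]; rewrite /phi3 /= !ffunE. Qed.
Lemma phi3K : cancel phi3 psi3.
Proof.
move=> f; apply/ffunP => i; rewrite /= ffunE.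
by case: i => [[|[|[|k]]] Hk] //=; congr (f _); apply: val_inj.
Qed.

Lemma cond3 a b c :
  [forall x, forall y, @S21_adj 0 x y ==> adj (psi3 (a, b, c) x) (psi3 (a, b, c) y)]
  = adj a b && adj b c.
Proof.
apply/idP/idP.
  move=> H; have h x y := implyP (forallP (forallP H x) y).
  move: (h (@Ordinal 3 0 isT) (@Ordinal 3 1 isT) isT) (h (@Ordinal 3 1 isT) (@Ordinal 3 2 isT) isT).
  by rewrite !ffunE /= => -> ->.
case/andP => ab bc; apply/forallP => x; apply/forallP => y; apply/implyP.
case: x => [[|[|[|x]]] Hx] //; case: y => [[|[|[|y]]] Hy] //; rewrite !ffunE //=;
  by rewrite // adj_sym.
Qed.

Lemma cond5 a b c d e :
  [forall x, forall y, @S21_adj 2 x y ==> adj (psi5 (a, b, c, d, e) x) (psi5 (a, b, c, d, e) y)]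
  = [&& adj a b, adj a c, adj a d & adj d e].
Proof.
apply/idP/idP.
  move=> H; have h x y := implyP (forallP (forallP H x) y).
  move: (h (@o5 0 isT) (@o5 1 isT) isT) (h (@o5 0 isT) (@o5 2 isT) isT)
     (h (@o5 0 isT) (@o5 3 isT) isT) (h (@o5 3 isT) (@o5 4 isT) isT).
  by rewrite !ffunE /= => -> -> -> ->.
case/and4P => ab ac ad de; apply/forallP => x; apply/forallP => y; apply/implyP.
case: x => [[|[|[|[|[|x]]]]] Hx] //; case: y => [[|[|[|[|[|y]]]]] Hy] //; rewrite !ffunE //=;
  by rewrite // adj_sym.
Qed.


Lemma homP3 : hom (S21 0) G = \sum_a \sum_b adj a b * dg b.
Proof.
rewrite homE (reindex psi3) /=; last exact: onW_bij (Bijective psi3K phi3K).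
rewrite !sum_pair; apply: eq_bigr => a _; apply: eq_bigr => b _.
rewrite /dg big_distrr /=; apply: eq_bigr => c _.
by rewrite cond3 mulnb.
Qed.

Lemma homS212 : hom (S21 2) G = \sum_a dg a * dg a * \sum_d adj a d * dg d.
Proof.
rewrite homE (reindex psi5) /=; last exact: onW_bij (Bijective psi5K phi5K).
rewrite !sum_pair; apply: eq_bigr => a _.
rewrite -mulnA {1}/dg big_distrl /=; apply: eq_bigr => b _.
rewrite {1}/dg big_distrl big_distrr /=; apply: eq_bigr => c _.
rewrite big_distrr big_distrr /=; apply: eq_bigr => d _.
rewrite /dg big_distrr big_distrr big_distrr /=; apply: eq_bigr => e _.
rewrite cond5 -!mulnb; ring.
Qed.

Definition psi6 (p : T * (T * T * T * T * T)) : {ffun vtx (dunion S0 (S21 2)) -> T} :=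
  [ffun x => match x with inl _ => p.1 | inr i => psi5 p.2 i end].
Definition phi6 (f : {ffun vtx (dunion S0 (S21 2)) -> T}) : T * (T * T * T * T * T) :=
  (f (inl ord0), phi5 [ffun i => f (inr i)]).
Lemma psi6K : cancel psi6 phi6.
Proof.
move=> [z t]; rewrite /phi6 /= ffunE; congr pair.
by rewrite -{2}(psi5K t); congr phi5; apply/ffunP => i; rewrite !ffunE.
Qed.
Lemma phi6K : cancel phi6 psi6.
Proof.
move=> f; apply/ffunP => -[i|i]; rewrite ffunE.
  by rewrite /= (ord1 i).
change (psi5 (phi5 [ffun i => f (inr i)]) i = f (inr i)).
by rewrite phi5K ffunE.
Qed.

Lemma cond6 z a b c d e :
  [forall x, forall y, adj x y ==> adj (psi6 (z, (a, b, c, d, e)) x) (psi6 (z, (a, b, c, d, e)) y)]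
  = [&& adj a b, adj a c, adj a d & adj d e].
Proof.
rewrite -cond5; apply/idP/idP.
  move=> H; apply/forallP => x; apply/forallP => y; apply/implyP => xy.
  by move: (implyP (forallP (forallP H (inr x)) (inr y)) xy); rewrite !ffunE.
move=> H; apply/forallP => -[x|x]; apply/forallP => -[y|y] //=.
move: (forallP (forallP H x) y); by rewrite !ffunE /=.
Qed.

Lemma homF1 : hom (dunion S0 (S21 2)) G = #|T| * hom (S21 2) G.
Proof.
rewrite homE (reindex psi6) /=; last exact: onW_bij (Bijective psi6K phi6K).
rewrite sum_pair -sum_nat_const; apply: eq_bigr => z _.
rewrite homE (reindex psi5) /=; last exact: onW_bij (Bijective psi5K phi5K).
rewrite !sum_pair; apply: eq_bigr => a _; apply: eq_bigr => b _; apply: eq_bigr => c _.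
apply: eq_bigr => d _; apply: eq_bigr => e _.
by rewrite cond5 cond6.
Qed.

Lemma homS0 : hom S0 G = #|T|.
Proof.
rewrite homE (eq_bigr (fun _ => 1)); last first.
  move=> f _; have -> // : [forall x, forall y, adj x y ==> adj (f x) (f y)].
  by apply/forallP => x; apply/forallP.
by rewrite sum1_card card_ffun card_ord expn1.
Qed.

Lemma main_ineq : (hom (S21 0) G ^ 2 <= hom S0 G * hom (S21 2) G)%N.
Proof.
rewrite homP3 homS0 homS212.
set s := fun a => \sum_b adj a b * dg b.
have step1 : (\sum_a s a) ^ 2 <= #|T| * \sum_a s a ^ 2.
  have E : forall F : T -> nat, \sum_i 1 * F i = \sum_i F i.
    by move=> F; apply: eq_bigr => i _; rewrite mul1n.
  have C : \sum_(i : T) 1 = #|T| by rewrite sum1_card.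
  by have := CS (fun _ => 1) s; rewrite !E C.
apply: (leq_trans step1); apply: leq_mul => //.
have -> : \sum_a dg a * dg a * \sum_d adj a d * dg d =
          \sum_a dg a * \sum_b adj a b * dg b ^ 2.
  under eq_bigr => a _ do rewrite big_distrr /=.
  rewrite exchange_big /=; apply: eq_bigr => b _.
  rewrite big_distrr /=; apply: eq_bigr => a _.
  rewrite (adj_sym a b); ring.
apply: leq_sum => a _; exact: CS.
Qed.

End G.

Definition K2_adj : rel bool := fun x y => x != y.
Lemma K2_sym : symmetric K2_adj. Proof. by move=> x y; rewrite /K2_adj eq_sym. Qed.
Lemma K2_irr : irreflexive K2_adj. Proof. by move=> x; rewrite /K2_adj eqxx. Qed.
Definition K2 : graph := Graph K2_sym K2_irr.

Lemma homP3_K2 : hom (S21 0) K2 = 2.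
Proof. by rewrite homP3 /dg !big_bool. Qed.
Lemma homF1_K2 : hom (dunion S0 (S21 2)) K2 = 4.
Proof. by rewrite homF1 homS212 /dg !big_bool card_bool. Qed.

Unset Implicit Arguments.
Local Open Scope ring_scope.

Theorem theorem3p6 (R : realType) :
  isHDE (dunion S0 (S21 2)) (S21 0) (2 : R) /\
  (forall G : graph, (hom (S21 0) G ^ 2 <= hom S0 G * hom (S21 2) G)%N).
Proof.
split; last exact: main_ineq.
split.
  move=> G; rewrite powR_mulrn // -natrX ler_nat homF1 -homS0.
  exact: main_ineq.
move=> c' /(_ K2); rewrite homP3_K2 homF1_K2.
have -> : (4%:R : R) = (2%:R : R) `^ 2%:R by rewrite powR_mulrn // -natrX.
have p2 : (0 : R) < 2%:R by [].
move=> H.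
have L : ln ((2%:R : R) `^ c') <= ln ((2%:R : R) `^ 2%:R).
  by rewrite ler_ln // posrE powR_gt0.
by rewrite !ln_powR ler_pM2r ?ln_gt0 ?ltr1n in L.
Qed.
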